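(* Let $\mathfrak{H}$ be a Euclidean space and let $(\mathcal{X},\mathsf{S},\gamma,(\Lambda_{a})_{a\in\mathcal{A}})$ be a spectral decomposition system for $\mathfrak{H}$ such that the set $\{\Lambda_a\}_{a\in\mathcal{A}}$ is closed in $\mathscr{L}(\mathcal{X},\mathfrak{H})$. Let $\varphi\colon\mathcal{X}\to(-\infty,+\infty]$ be proper and $\mathsf{S}$-invariant, let $\Psi\colon\mathfrak{H}\to\mathbb{R}$ be Fréchet differentiable, and let $X\in\mathfrak{H}$ be such that $\gamma(X)\in\operatorname{dom}\varphi$. Suppose that $X$ is a local minimizer of $\varphi\circ\gamma+\Psi$. Then there exist $y\in\partial_{\mathsf{F}}\varphi(\gamma(X))$ and $a\in\mathcal{A}_X$ such that $-\nabla\Psi(X)=\Lambda_a y$.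
   Context: A Euclidean space is a finite-dimensional real Hilbert space; $\mathscr{L}(\mathcal{X},\mathfrak{H})$ carries the operator-norm topology. A spectral decomposition system for a Euclidean space $\mathfrak{H}$ is a tuple $(\mathcal{X},\mathsf{S},\gamma,(\Lambda_a)_{a\in\mathcal{A}})$ where $\mathcal{X}$ is a Euclidean space, $\mathsf{S}$ is a group acting on $\mathcal{X}$ such that each map $x\mapsto \mathsf{s}\cdot x$ is a linear isometry, $\gamma\colon\mathfrak{H}\to\mathcal{X}$ is a mapping, and each $\Lambda_a\colon\mathcal{X}\to\mathfrak{H}$ is a linear isometry, such that: [A] there exists a mapping $\tau\colon\mathcal{X}\to\mathcal{X}$ with $\tau(\mathsf{s}\cdot x)=\tau(x)$ for all $\mathsf{s},x$, $\tau(x)\in\mathsf{S}\cdot x$ for all $x$, and $\gamma\circ\Lambda_a=\tau$ for all $a\in\mathcal{A}$; [B] for every $X\in\mathfrak{H}$ there exists $a\in\mathcal{A}$ with $X=\Lambda_a\gamma(X)$; [C] $\langle X,Y\rangle\le\langle\gamma(X),\gamma(Y)\rangle$ for all $X,Y\in\mathfrak{H}$. $\mathcal{A}_X=\{a\in\mathcal{A}:X=\Lambda_a\gamma(X)\}$. A function $\varphi$ on $\mathcal{X}$ is $\mathsf{S}$-invariant if $\varphi(\mathsf{s}\cdot x)=\varphi(x)$ for all $\mathsf{s},x$; $\operatorname{dom}\varphi=\{x:\varphi(x)<+\infty\}$. The Fréchet subdifferential of $f$ at $x$ with $f(x)\in\mathbb{R}$ is $\partial_{\mathsf{F}}f(x)=\{y:\liminf_{z\to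 x,z\ne x}(f(z)-f(x)-\langle z-x,y\rangle)/\|z-x\|\ge0\}$. *)

(* Defs.v *)
From HB Require Import structures.
From mathcomp Require Import all_boot all_order all_algebra.
From mathcomp Require Import all_classical all_reals all_analysis.
Set Implicit Arguments. Unset Strict Implicit. Unset Printing Implicit Defensive.
Import Order.TTheory GRing.Theory Num.Theory.
Local Open Scope ring_scope.

(* A Euclidean space of dimension n is modelled as 'rV[R]_n with the
   standard inner product; linear maps X -> H as matrices acting on rows. *)

Definition dot (R : realType) (n : nat) (u v : 'rV[R]_n) : R := (u *m v^T) 0 0.

Definition enorm (R : realType) (n : nat) (u : 'rV[R]_n) : R :=
  Num.sqrt (dot u u).

Definition is_isometric_group_action (R : realType) (m : nat) (G : Type)
  (mul : G -> G -> G) (one : G) (inv : G -> G)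
  (act : G -> 'rV[R]_m -> 'rV[R]_m) : Prop :=
  [/\ (forall s t u, mul s (mul t u) = mul (mul s t) u) /\
      (forall s, mul one s = s /\ mul s one = s) /\
      (forall s, mul (inv s) s = one /\ mul s (inv s) = one),
      (forall x, act one x = x),
      (forall s t x, act (mul s t) x = act s (act t x)) &
      (forall s, (forall x y, act s (x + y) = act s x + act s y) /\
                 (forall (c : R) x, act s (c *: x) = c *: act s x) /\
                 (forall x, enorm (act s x) = enorm x))].

Definition lin_isometry (R : realType) (m n : nat) (M : 'M[R]_(m, n)) : Prop :=
  forall x : 'rV[R]_m, enorm (x *m M) = enorm x.

Definition spectral_decomposition_system (R : realType) (m n : nat)
  (G : Type) (mul : G -> G -> G) (one : G) (inv : G -> G)
  (act : G -> 'rV[R]_m -> 'rV[R]_m) (gamma : 'rV[R]_n -> 'rV[R]_m)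
  (A : Type) (Lam : A -> 'M[R]_(m, n)) : Prop :=
  [/\ is_isometric_group_action mul one inv act,
      (forall a, lin_isometry (Lam a)),
      (exists tau : 'rV[R]_m -> 'rV[R]_m,
          [/\ (forall s x, tau (act s x) = tau x),
              (forall x, exists s, tau x = act s x) &
              (forall a x, gamma (x *m Lam a) = tau x)]),
      (* [B] *)
      (forall X, exists a, X = gamma X *m Lam a) &
      (* [C] *)
      (forall X Y, dot X Y <= dot (gamma X) (gamma Y))].

Definition adapted_set (R : realType) (m n : nat) (gamma : 'rV[R]_n -> 'rV[R]_m)
  (A : Type) (Lam : A -> 'M[R]_(m, n)) (X : 'rV[R]_n) : set A :=
  [set a | X = gamma X *m Lam a].

Definition S_invariant (R : realType) (m : nat) (G : Type)
  (act : G -> 'rV[R]_m -> 'rV[R]_m) (phi : 'rV[R]_m -> \bar R) : Prop :=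
  forall s x, phi (act s x) = phi x.

Definition proper_fun (R : realType) (m : nat) (phi : 'rV[R]_m -> \bar R) : Prop :=
  (forall x, phi x != -oo%E) /\ (exists x, phi x != +oo%E).

Definition domf (R : realType) (m : nat) (phi : 'rV[R]_m -> \bar R) : set 'rV[R]_m :=
  [set x | (phi x < +oo)%E].

(* Fréchet subdifferential: f x real and
   liminf_{z -> x, z <> x} (f z - f x - <z - x, y>) / ||z - x|| >= 0,
   written out with epsilon-delta. *)
Definition frechet_subdiff (R : realType) (m : nat) (f : 'rV[R]_m -> \bar R)
  (x : 'rV[R]_m) : set 'rV[R]_m :=
  [set y | f x \is a fin_num /\
     forall eps : R, 0 < eps -> exists2 delta : R, 0 < delta &
       forall z, 0 < enorm (z - x) < delta ->
         (- (eps * enorm (z - x))%:E <= f z - f x - (dot (z - x) y)%:E)%E].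

Definition is_frechet_gradient (R : realType) (n : nat) (Psi : 'rV[R]_n -> R)
  (X g : 'rV[R]_n) : Prop :=
  forall eps : R, 0 < eps -> exists2 delta : R, 0 < delta &
    forall Y, 0 < enorm (Y - X) < delta ->
      `|Psi Y - Psi X - dot (Y - X) g| <= eps * enorm (Y - X).

Definition local_minimizer (R : realType) (n : nat) (F : 'rV[R]_n -> \bar R)
  (X : 'rV[R]_n) : Prop :=
  exists2 eps : R, 0 < eps & forall Y, enorm (Y - X) < eps -> (F X <= F Y)%E.

(* Main.v *)
Require Import Defs.
From HB Require Import structures.
From mathcomp Require Import all_boot all_order all_algebra.
From mathcomp Require Import all_classical all_reals all_analysis.
From mathcomp Require Import ring lra.
Import Order.TTheory GRing.Theory Num.Theory.
Import numFieldNormedType.Exports.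
Local Open Scope ring_scope.
Local Open Scope classical_set_scope.
Set Implicit Arguments. Unset Strict Implicit. Unset Printing Implicit Defensive.

Section S.
Variable R : realType.

Lemma ec_cont (T : topologicalType) p q (f : T -> 'M[R]_(p,q)) :
  (forall i j, continuous (fun x => f x i j)) -> continuous f.
Proof.
move=> hf x; apply/cvg_ballP => e e0.
have : \forall y \near x, forall ij : 'I_p * 'I_q,
    ball (f x ij.1 ij.2) e (f y ij.1 ij.2).
  apply: filter_forall => -[i j]; exact: (cvg_ball (hf i j x) e0).
apply: filterS => y H.
split => // i j; exact: (H (i, j)).
Qed.

Lemma cont_sum (T : topologicalType) (I : finType) (F : I -> T -> R) :
  (forall i, continuous (F i)) -> continuous (fun x => \sum_i F i x).
Proof.
move=> hF.
suff H : forall s : seq I, continuous (fun x => \sum_(i <- s) F i x) by apply: H.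
elim=> [|i s ih].
  under eq_fun do rewrite big_nil; exact: cst_continuous.
under eq_fun do rewrite big_cons.
move=> x; apply: cvgD; [exact: hF | exact: ih].
Qed.

Definition ec (T : topologicalType) p q (f : T -> 'M[R]_(p,q)) :=
  forall i j, continuous (fun x => f x i j).
Arguments ec {T p q}.

Lemma ec_cst (T : topologicalType) p q (C : 'M[R]_(p,q)) : ec (fun _ : T => C).
Proof. by move=> i j; exact: cst_continuous. Qed.

Lemma ec_id p q : ec (fun L : 'M[R]_(p,q) => L).
Proof. by move=> i j; exact: coord_continuous. Qed.

Lemma ec_tr (T : topologicalType) p q (f : T -> 'M[R]_(p,q)) :
  ec f -> ec (fun x => (f x)^T).
Proof. by move=> hf i j; under eq_fun do rewrite mxE; exact: hf. Qed.

Lemma ec_add (T : topologicalType) p q (f g : T -> 'M[R]_(p,q)) :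
  ec f -> ec g -> ec (fun x => f x + g x).
Proof.
move=> hf hg i j; under eq_fun do rewrite mxE.
move=> x; apply: cvgD; [exact: hf | exact: hg].
Qed.

Lemma ec_opp (T : topologicalType) p q (f : T -> 'M[R]_(p,q)) :
  ec f -> ec (fun x => - f x).
Proof.
move=> hf i j; under eq_fun do rewrite mxE.
move=> x; apply: cvgN; exact: hf.
Qed.

Lemma ec_mul (T : topologicalType) p q r (f : T -> 'M[R]_(p,q))
  (g : T -> 'M[R]_(q,r)) : ec f -> ec g -> ec (fun x => f x *m g x).
Proof.
move=> hf hg i j; under eq_fun do rewrite mxE.
apply: cont_sum => k x; apply: cvgM; [exact: hf | exact: hg].
Qed.

Lemma dotE n (u v : 'rV[R]_n) : dot u v = \sum_j u 0 j * v 0 j.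
Proof. by rewrite /dot mxE; apply: eq_bigr => j _; rewrite mxE. Qed.

Lemma ec_nsq (T : topologicalType) n (f : T -> 'rV[R]_n) :
  ec f -> continuous (fun x => dot (f x) (f x)).
Proof.
move=> hf; under eq_fun do rewrite dotE.
apply: cont_sum => k x; apply: cvgM; exact: hf.
Qed.


End S.

Section Dot.
Variable R : realType.
Variable k : nat.
Implicit Types u v w : 'rV[R]_k.

Lemma dotC u v : dot u v = dot v u.
Proof. by rewrite !dotE; apply: eq_bigr => j _; rewrite mulrC. Qed.

Lemma dotDl u v w : dot (u + v) w = dot u w + dot v w.
Proof. by rewrite !dotE -big_split; apply: eq_bigr => j _; rewrite mxE mulrDl. Qed.

Lemma dotDr u v w : dot w (u + v) = dot w u + dot w v.
Proof. by rewrite dotC dotDl !(dotC w). Qed.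

Lemma dotZl (c : R) u v : dot (c *: u) v = c * dot u v.
Proof. by rewrite !dotE mulr_sumr; apply: eq_bigr => j _; rewrite mxE mulrA. Qed.

Lemma dotZr (c : R) u v : dot u (c *: v) = c * dot u v.
Proof. by rewrite dotC dotZl dotC. Qed.

Lemma dotNl u v : dot (- u) v = - dot u v.
Proof. by rewrite -scaleN1r dotZl mulN1r. Qed.

Lemma dotNr u v : dot u (- v) = - dot u v.
Proof. by rewrite dotC dotNl dotC. Qed.

Lemma dotBl u v w : dot (u - v) w = dot u w - dot v w.
Proof. by rewrite dotDl dotNl. Qed.

Lemma dotBr u v w : dot w (u - v) = dot w u - dot w v.
Proof. by rewrite dotDr dotNr. Qed.

Lemma dot0l v : dot 0 v = 0.
Proof. by rewrite dotE big1 // => j _; rewrite mxE mul0r. Qed.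

Lemma nsq_ge0 u : 0 <= dot u u.
Proof. by rewrite dotE; apply: sumr_ge0 => j _; rewrite -expr2 sqr_ge0. Qed.


Lemma nsq_eq0 u : dot u u = 0 -> u = 0.
Proof.
rewrite dotE => /eqP; rewrite psumr_eq0; last by move=> j _; rewrite -expr2 sqr_ge0.
move=> /allP H; apply/rowP => j; rewrite mxE.
by have := H j (mem_index_enum j); rewrite /= mulf_eq0 orbb => /eqP ->.
Qed.

Lemma enorm_ge0 u : 0 <= enorm u.
Proof. exact: sqrtr_ge0. Qed.

Lemma enormE u : enorm u ^+ 2 = dot u u.
Proof. by rewrite /enorm sqr_sqrtr // nsq_ge0. Qed.

Lemma nsq_para u v : dot (u + v) (u + v) <= 2 * dot u u + 2 * dot v v.
Proof.
have h := nsq_ge0 (u - v); rewrite !dotBl !dotBr in h.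
rewrite !dotDl !dotDr; rewrite (dotC v u) in h *; lra.
Qed.

Lemma nsqZ (c : R) u : dot (c *: u) (c *: u) = c ^+ 2 * dot u u.
Proof. by rewrite dotZl dotZr mulrA expr2. Qed.

End Dot.

Lemma dot_mulmx (R : realType) p q (a : 'rV[R]_p) (b : 'rV[R]_q) (L : 'M[R]_(p,q)) :
  dot (a *m L) b = dot a (b *m L^T).
Proof. by rewrite /dot trmx_mul trmxK mulmxA. Qed.

Section Iso.
Variables (R : realType) (p q : nat) (L : 'M[R]_(p,q)).
Hypothesis hL : lin_isometry L.
Implicit Types u v : 'rV[R]_p.

Lemma iso_nsq u : dot (u *m L) (u *m L) = dot u u.
Proof. by rewrite -!enormE hL. Qed.

Lemma iso_dot u v : dot (u *m L) (v *m L) = dot u v.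
Proof.
have := iso_nsq (u + v); rewrite mulmxDl !dotDl !dotDr !iso_nsq.
rewrite (dotC (v *m L)) (dotC v); lra.
Qed.

Lemma iso_LLT u : u *m L *m L^T = u.
Proof.
apply/eqP; rewrite -subr_eq0; apply/eqP/nsq_eq0.
by rewrite {1}dotBl dot_mulmx trmxK iso_dot subrr.
Qed.

Lemma iso_proj (u : 'rV[R]_q) : dot (u *m L^T *m L - u) (u *m L^T *m L - u) <= dot u u.
Proof.
set w := u *m L^T.
rewrite !dotBl !dotBr iso_nsq (dotC u) dot_mulmx -/w.
have := nsq_ge0 w; lra.
Qed.

Lemma proj_aux u (D w : 'rV[R]_q) : w = u *m L + D ->
  w *m L^T *m L - w = D *m L^T *m L - D.
Proof.
move=> ->; rewrite !mulmxDl iso_LLT.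
by rewrite opprD addrACA subrr add0r.
Qed.

End Iso.

Lemma iso_entry (R : realType) p q (L : 'M[R]_(p,q)) :
  lin_isometry L -> forall i j, `|L i j| <= 1.
Proof.
move=> hL i j.
have h := iso_nsq hL (delta_mx 0 i).
rewrite -rowE in h.
have h1 : dot (delta_mx 0 i : 'rV[R]_p) (delta_mx 0 i) = 1.
  rewrite dotE (bigD1 i) //= big1 => [|k hk]; rewrite !mxE ?eqxx /=.
    by rewrite mulr1 addr0.
  by rewrite (negbTE hk) mulr0.
rewrite h1 dotE (bigD1 j) //= in h.
have h2 : 0 <= \sum_(k | k != j) row i L 0 k * row i L 0 k.
  by apply: sumr_ge0 => k _; rewrite -expr2 sqr_ge0.
rewrite !mxE in h.
have h3 : L i j * L i j <= 1 by lra.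
have [x0|x0] := lerP 0 (L i j); [rewrite ger0_norm // | rewrite ltr0_norm //]; nra.
Qed.

Lemma compact_iso (R : realType) m n (K : set 'M[R]_(m,n)) :
  closed K -> (forall L, K L -> lin_isometry L) -> compact K.
Proof.
move=> cK hK.
pose RB := [set w : 'rV[R]_(m * n) | forall k, (`[-1, 1]%classic : set R) (w ord0 k)].
have cRB : compact RB.
  have := @rV_compact R (m * n) (fun=> `[-1, 1]%classic) (fun=> @segment_compact R (-1) 1).
  exact.
have cv : continuous (@vec_mx R m n).
  apply: ec_cont => i j; under eq_fun do rewrite mxE; exact: coord_continuous.
have cI : compact (vec_mx @` RB).
  by apply: continuous_compact => //; exact: continuous_subspaceT.
apply: (subclosed_compact cK cI) => L KL.
exists (mxvec L); last exact: mxvecK.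
move=> k; case/mxvec_indexP: k => i j; rewrite mxvecE /= in_itv /=.
by rewrite -ler_norml; exact: iso_entry (hK _ KL) i j.
Qed.

Unset Implicit Arguments.
Local Close Scope classical_set_scope.

Theorem corollary4p4 (R : realType) (m n : nat)
  (G : Type) (mul : G -> G -> G) (one : G) (inv : G -> G)
  (act : G -> 'rV[R]_m -> 'rV[R]_m) (gamma : 'rV[R]_n -> 'rV[R]_m)
  (A : Type) (Lam : A -> 'M[R]_(m, n))
  (hsys : spectral_decomposition_system mul one inv act gamma Lam)
  (hclosed : closed (range Lam : set 'M[R]_(m, n)))
  (phi : 'rV[R]_m -> \bar R)
  (hprop : proper_fun phi) (hinv : S_invariant act phi)
  (Psi : 'rV[R]_n -> R) (gradPsi : 'rV[R]_n -> 'rV[R]_n)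
  (hPsi : forall Z, is_frechet_gradient Psi Z (gradPsi Z))
  (X : 'rV[R]_n) (hdom : domf phi (gamma X))
  (hmin : local_minimizer (fun Y => (phi (gamma Y) + (Psi Y)%:E)%E) X) :
  exists y, frechet_subdiff phi (gamma X) y /\
    exists a, adapted_set gamma Lam X a /\ - gradPsi X = y *m Lam a.
Proof.
case: hsys => hgrp hiso [tau [htau1 htau2 htau3]] hB hC.
have [r hr] : exists r, phi (gamma X) = r%:E.
  have h1 := hprop.1 (gamma X); move: hdom h1; rewrite /domf /=.
  by case: (phi (gamma X)) => [r| |] //= _ _; exists r.
set x := gamma X in hr *.
set v := - gradPsi X.
have phi_inv : forall a z, phi (gamma (z *m Lam a)) = phi z.
  by move=> a z; rewrite htau3; have [s ->] := htau2 z; exact: hinv.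
have nsq_gamma : forall Y, dot (gamma Y) (gamma Y) = dot Y Y.
  by move=> Y; have [a ha] := hB Y; rewrite [in RHS]ha iso_nsq.
have lip : forall Y Z, dot (gamma Z - gamma Y) (gamma Z - gamma Y) <= dot (Z - Y) (Z - Y).
  move=> Y Z; have := hC Z Y.
  rewrite !dotBl !dotBr !nsq_gamma (dotC (gamma Y)) (dotC Y); lra.
have key : forall e, 0 < e -> exists2 d, 0 < d & forall W, enorm (W - X) < d ->
    (phi x + (dot (W - X) v - e * enorm (W - X))%:E <= phi (gamma W))%E.
  move=> e e0; case: hmin => e1 e10 hm; case: (hPsi X e e0) => d1 d10 hd.
  exists (Num.min e1 d1); first by rewrite lt_min e10.
  move=> W; rewrite lt_min => /andP[hW1 hW2].
  have [hW0|hWpos] := eqVneq (enorm (W - X)) 0.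
    have hWX : W - X = 0 by apply: nsq_eq0; rewrite -enormE hW0 expr2 mul0r.
    rewrite hW0 hWX dot0l mulr0 subrr adde0.
    by have -> : W = X by apply/eqP; rewrite -subr_eq0 hWX.
  have hpos : 0 < enorm (W - X) by rewrite lt0r hWpos enorm_ge0.
  have hd' := hd W (introT andP (conj hpos hW2)).
  have hm' := hm W hW1; rewrite /= -/x hr in hm'; rewrite hr.
  move: hm' (hprop.1 (gamma W)); case: (phi (gamma W)) => [s| |] //= hm' _.
    rewrite -!EFinD lee_fin in hm'; rewrite -EFinD lee_fin.
    move: hd'; rewrite /v dotNr ler_norml => /andP[h3 h4]; lra.
  exact: leey.
have subgrad : forall a, adapted_set gamma Lam X a -> frechet_subdiff phi x (v *m (Lam a)^T).
  move=> a ha; rewrite /adapted_set /= -/x in ha.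
  split; first by rewrite hr.
  move=> e e0; case: (key e e0) => d d0 hk; exists d => // z /andP[hz1 hz2].
  have hiso' := hiso a.
  have eW : (z *m Lam a) - X = (z - x) *m Lam a by rewrite mulmxBl -ha.
  have en : enorm (z *m Lam a - X) = enorm (z - x) by rewrite eW hiso'.
  have := hk (z *m Lam a); rewrite en => /(_ hz2).
  rewrite eW dot_mulmx phi_inv hr.
  move: (hprop.1 z); case: (phi z) => [s| |] //= _ h.
    rewrite -!EFinD lee_fin; rewrite -EFinD lee_fin in h; lra.
  by rewrite !addye // leey.
pose g := fun L : 'M[R]_(m,n) =>
  dot (x *m L - X) (x *m L - X) + dot (v *m L^T *m L - v) (v *m L^T *m L - v).
have gc : continuous g.
  have c1 : continuous (fun L : 'M[R]_(m,n) => dot (x *m L - X) (x *m L - X)).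
    apply: (@ec_nsq _ _ _ (fun L => x *m L - X)).
    apply: ec_add; [apply: ec_mul; [exact: ec_cst|exact: ec_id]|].
    by apply: ec_opp; exact: ec_cst.
  have c2 : continuous (fun L : 'M[R]_(m,n) =>
      dot (v *m L^T *m L - v) (v *m L^T *m L - v)).
    apply: (@ec_nsq _ _ _ (fun L => v *m L^T *m L - v)).
    apply: ec_add; last by apply: ec_opp; exact: ec_cst.
    apply: ec_mul; last exact: ec_id.
    apply: ec_mul; first exact: ec_cst.
    by apply: ec_tr; exact: ec_id.
  move=> L; rewrite /g; apply: cvgD; [exact: nbhs_filter|exact: c1|exact: c2].
have g0 : forall L, 0 <= g L by move=> L; rewrite addr_ge0 // nsq_ge0.
have ginf : forall eta, 0 < eta -> exists a, g (Lam a) < eta.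
  move=> eta eta0.
  pose ep := eta / (4 * (eta + 1)).
  have ep0 : 0 < ep by rewrite /ep divr_gt0 // mulr_gt0 // addr_gt0.
  have hep : ep * (4 * (eta + 1)) = eta by rewrite /ep mulfVK // gt_eqF // mulr_gt0 // addr_gt0.
  have hep1 : 4 * ep <= 1 by nra.
  have hep2 : 4 * ep <= eta by nra.
  case: (key ep ep0) => d d0 hk.
  pose N := dot v v.
  have N0 : 0 <= N := nsq_ge0 v.
  pose d' := d / (d + 1).
  have d'0 : 0 < d' by rewrite /d' divr_gt0 // addr_gt0.
  have hd' : d' * (d + 1) = d by rewrite /d' mulfVK // gt_eqF // addr_gt0.
  pose t := d' / (2 * (N + 1)).
  have t0 : 0 < t by rewrite /t divr_gt0 // mulr_gt0 // ltr_wpDl.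
  have ht : t * (2 * (N + 1)) = d' by rewrite /t mulfVK // gt_eqF // mulr_gt0 // ltr_wpDl.
  have hd'1 : d' < 1 by nra.
  have ht1 : t <= 1 by nra.
  pose Z := X + t *: v.
  have [a ha] := hB Z.
  exists a.
  have hL := hiso a.
  pose L := Lam a. rewrite -/L in ha hL *.
  pose W := x *m L. pose D := W - X.
  have hWZ : dot (W - Z) (W - Z) <= t ^+ 2 * N.
    have -> : W - Z = (x - gamma Z) *m L by rewrite mulmxBl -ha.
    rewrite iso_nsq //.
    have := lip Z X.
    have -> : X - Z = - (t *: v) by rewrite /Z opprD addrA subrr add0r.
    by rewrite dotNl dotNr opprK nsqZ.
  have hZX : dot (Z - X) (Z - X) = t ^+ 2 * N.
    by rewrite /Z addrC addKr nsqZ.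
  have hD4 : dot D D <= 4 * (t ^+ 2 * N).
    have -> : D = (W - Z) + (Z - X) by rewrite addrA subrK.
    by apply: le_trans (nsq_para _ _) _; rewrite hZX; lra.
  have hDd : enorm D < d.
    have hE := enormE D; have hE0 := enorm_ge0 D.
    have hd'd : d' < d by nra.
    have tt : 0 < t * t by rewrite mulr_gt0.
    have h4 : 4 * (t ^+ 2 * N) < d' * d'.
      rewrite -ht expr2; have := mulr_ge0 (ltW tt) N0; nra.
    rewrite ltNge; apply/negP => hc.
    have : d * d <= enorm D * enorm D by nra.
    rewrite expr2 in hE; nra.
  have hk' := hk W hDd.
  rewrite /W phi_inv hr -/W -EFinD lee_fin in hk'.
  have hWn : dot W W = dot X X by rewrite iso_nsq // nsq_gamma.
  have hWZd : dot X Z <= dot W Z.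
    have -> : dot W Z = dot x (gamma Z) by rewrite {1}ha iso_dot.
    exact: hC.
  have hq : dot D D <= 2 * t * (ep * enorm D).
    have hnD : dot D D = dot W W - 2 * dot W X + dot X X.
      rewrite /D !dotBl !dotBr (dotC X W); lra.
    rewrite hnD hWn.
    move: hWZd hk'; rewrite /Z !dotDr !dotZr ?dotBl => h5 h6.
    nra.
  have hen : enorm D <= 2 * t * ep.
    have hE := enormE D; have hE0 := enorm_ge0 D; rewrite expr2 in hE.
    rewrite leNgt; apply/negP => hc.
    have htep : 0 < 2 * t * ep by nra.
    have he : 0 < enorm D by lra.
    have : 2 * t * ep * enorm D < enorm D * enorm D by rewrite ltr_pM2r.
    rewrite -mulrA; lra.
  have hD2 : dot D D <= 4 * t ^+ 2 * ep ^+ 2.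
    have hE := enormE D; have hE0 := enorm_ge0 D; rewrite expr2 in hE. rewrite !expr2. nra.
  pose u := gamma Z - x.
  have htv : t *: v = u *m L + D.
    by rewrite /u mulmxBl -ha /D addrA subrK /Z addrC addKr.
  have hP : t *: (v *m L^T *m L - v) = D *m L^T *m L - D.
    by rewrite scalerBr !scalemxAl (proj_aux hL htv).
  have h2 : dot (v *m L^T *m L - v) (v *m L^T *m L - v) <= 4 * ep ^+ 2.
    have := iso_proj hL D; rewrite -hP nsqZ => h7.
    have h8 := nsq_ge0 (v *m L^T *m L - v).
    rewrite !expr2 in h7 hD2 *.
    have tt : 0 < t * t by nra.
    rewrite -(ler_pM2l tt); apply: (le_trans h7); apply: (le_trans hD2).
    by rewrite le_eqVlt; apply/orP; left; apply/eqP; ring.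
  rewrite /g -/L -/W -/D.
  rewrite !expr2 in hD2 h2 *.
  have htt : t * t <= 1 by nra.
  have h9 : 4 * (t * t) * (ep * ep) <= 4 * (ep * ep).
    have : 0 <= ep * ep by nra.
    nra.
  have h10 : 8 * (ep * ep) <= 2 * ep by nra.
  lra.
have cK : compact (range Lam) by apply: compact_iso => // L [a _ <-]; exact: hiso.
have ne : (range Lam !=set0)%classic by have [a0 _] := hB X; exists (Lam a0); exists a0.
have [c cK' hc] := compact_EVT_min ne cK (continuous_subspaceT gc).
move: cK' => /set_mem [a0 _ ha0].
have gc0 : g c = 0.
  apply/eqP; rewrite eq_le g0 andbT leNgt; apply/negP => hpos.
  have [a ha] := ginf _ hpos.
  have := hc (Lam a) (mem_set (ex_intro2 _ _ a I erefl)); lra.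
rewrite -ha0 /g in gc0.
have h1 := nsq_ge0 (x *m Lam a0 - X).
have h2 := nsq_ge0 (v *m (Lam a0)^T *m Lam a0 - v).
have e1 : x *m Lam a0 = X.
  by apply/eqP; rewrite -subr_eq0; apply/eqP/nsq_eq0; lra.
have e2 : v *m (Lam a0)^T *m Lam a0 = v.
  by apply/eqP; rewrite -subr_eq0; apply/eqP/nsq_eq0; lra.
exists (v *m (Lam a0)^T); split.
  by apply: subgrad; rewrite /adapted_set /= -/x e1.
by exists a0; split; [rewrite /adapted_set /= -/x e1 | rewrite e2].
Qed.
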